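(* Fix $0<\alpha'<\alpha<1$ and $a>0$. There exists $b>0$ such that for every integer $s\ge1$, $$\max_{\alpha' s\le k\le \alpha s}\ \mathbb E_k\Big[\exp\Big\{\frac{a\max_{0\le t\le 2s}x(t)}{\sqrt s}\Big\}\Big]\le b.$$
   Context: A Dyck path of length $2s$ is a sequence $x(0),\dots,x(2s)$ of integers with $x(0)=x(2s)=0$, $x(t)\ge0$ and $x(t)-x(t-1)=\pm1$. Step $t$ (from $t-1$ to $t$) is called odd if $t$ is odd. $\mathcal X_{s,k}$ is the set of Dyck paths of length $2s$ having exactly $k$ up steps at odd instants (its cardinality is the Narayana number $\frac1s\binom sk\binom s{k-1}$), and $\mathbb E_k$, $\mathbb P_k$ denote expectation and probability under the uniform distribution on $\mathcal X_{s,k}$. *)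

(* Defs.v *)
From Stdlib Require Import Reals ZArith List Bool.
Import ListNotations.

(* A path of length n is encoded by its list of n steps: true = up (+1), false = down (-1).
   Step number t (1-based) is the t-th element of the list. *)

Fixpoint all_paths (n : nat) : list (list bool) :=
  match n with
  | O => [[]]
  | S m => map (cons true) (all_paths m) ++ map (cons false) (all_paths m)
  end.

Fixpoint heights_from (h : Z) (p : list bool) : list Z :=
  match p with
  | [] => []
  | b :: q => let h' := (if b then h + 1 else h - 1)%Z in h' :: heights_from h' q
  end.

Definition is_dyck (p : list bool) : bool :=
  forallb (fun h => (0 <=? h)%Z) (heights_from 0 p)
  && Z.eqb (last (0%Z :: heights_from 0 p) 0%Z) 0%Z.

Fixpoint ups_at_odd (odd : bool) (p : list bool) : nat :=
  match p with
  | [] => O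
  | b :: q => ((if odd && b then 1 else 0) + ups_at_odd (negb odd) q)%nat
  end.

Definition odd_ups (p : list bool) : nat := ups_at_odd true p.

Definition X (s k : nat) : list (list bool) :=
  filter (fun p => is_dyck p && Nat.eqb (odd_ups p) k) (all_paths (2 * s)).

Definition max_height (p : list bool) : Z :=
  fold_right Z.max 0%Z (heights_from 0 p).

Definition Ek (s k : nat) (f : list bool -> R) : R :=
  (fold_right (fun p acc => (f p + acc)%R) 0%R (X s k) / INR (length (X s k)))%R.

(* Main.v *)
Require Import Defs.
From Stdlib Require Import Reals ZArith List Lia Lra Psatz Bool Arith.
Import ListNotations.

Fixpoint ct (l : list bool) : nat :=
  match l with [] => 0 | b :: l' => (if b then 1 else 0) + ct l' end%nat.

Fixpoint binom (n k : nat) : nat :=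
  match n, k with
  | _, O => 1
  | O, S _ => 0
  | S n', S k' => binom n' k' + binom n' (S k')
  end%nat.

Lemma binom_big n k : (n < k)%nat -> binom n k = 0%nat.
Proof. revert k; induction n; intros [|k] H; simpl; try lia. rewrite !IHn; lia. Qed.

Lemma binom_0 n : binom n 0 = 1%nat.
Proof. destruct n; reflexivity. Qed.

Lemma binom_succ n k : ((k+1) * binom n (k+1) = (n-k) * binom n k)%nat.
Proof.
  revert k; induction n; intros k.
  - simpl. replace (k+1)%nat with (S k) by lia. simpl. lia.
  - destruct k as [|k].
    + simpl. specialize (IHn 0%nat). simpl in IHn. rewrite binom_0 in *. lia.
    + replace (S k + 1)%nat with (S (S k)) by lia.
      change (binom (S n) (S (S k))) with (binom n (S k) + binom n (S (S k)))%nat.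
      change (binom (S n) (S k)) with (binom n k + binom n (S k))%nat.
      pose proof (IHn (S k)) as H1. pose proof (IHn k) as H2.
      replace (S k + 1)%nat with (S (S k)) in H1 by lia.
      replace (k + 1)%nat with (S k) in H2 by lia.
      destruct (le_lt_dec n k) as [Hnk|Hnk].
      * rewrite (binom_big n (S k)) by lia. rewrite (binom_big n (S (S k))) by lia.
        destruct (Nat.eq_dec n k). subst. replace (S k - S k)%nat with 0%nat by lia. lia.
        rewrite (binom_big n k) by lia. lia.
      * replace (S n - S k)%nat with (n - k)%nat by lia.
        replace (n - S k)%nat with (n - k - 1)%nat in H1 by lia.
        nia.
Qed.

Lemma in_all_paths n l : In l (all_paths n) <-> length l = n.
Proof.
  revert l; induction n; intros l; simpl.
  - split. intros [H|[]]; subst; reflexivity. destruct l; simpl; try discriminate; auto.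
  - rewrite in_app_iff, !in_map_iff. split.
    + intros [[x [<- Hx]]|[x [<- Hx]]]; simpl; f_equal; apply IHn; auto.
    + destruct l as [|b l]; simpl; try discriminate. intros H. injection H as H.
      destruct b; [left|right]; exists l; split; auto; apply IHn; auto.
Qed.

Lemma nodup_all_paths n : NoDup (all_paths n).
Proof.
  induction n; simpl.
  - constructor. intros []. constructor.
  - apply NoDup_app.
    + apply NoDup_map_NoDup_ForallPairs; auto. intros x y _ _ H; injection H; auto.
    + apply NoDup_map_NoDup_ForallPairs; auto. intros x y _ _ H; injection H; auto.
    + intros x H1 H2. apply in_map_iff in H1, H2. destruct H1 as [? [<- _]]; destruct H2 as [? [H _]]; discriminate.
Qed.

Definition B (n j : nat) := filter (fun l => Nat.eqb (ct l) j) (all_paths n).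

Lemma length_filter_map {A C} (P : C -> bool) (f : A -> C) l :
  length (filter P (map f l)) = length (filter (fun x => P (f x)) l).
Proof. induction l; simpl; auto. destruct (P (f a)); simpl; auto. Qed.

Lemma length_B n j : length (B n j) = binom n j.
Proof.
  revert j; induction n; intros j; unfold B in *; simpl.
  - destruct j; reflexivity.
  - rewrite filter_app, length_app, !length_filter_map. simpl.
    destruct j as [|j].
    + assert (Hf: forall l : list (list bool), filter (fun _ => false) l = []) by (induction l; auto).
      rewrite Hf. simpl. rewrite IHn. apply binom_0.
    + rewrite !IHn. reflexivity.
Qed.

Lemma in_B n j l : In l (B n j) <-> length l = n /\ ct l = j.
Proof. unfold B. rewrite filter_In, in_all_paths, Nat.eqb_eq. tauto. Qed.

Lemma nodup_B n j : NoDup (B n j).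
Proof. apply NoDup_filter, nodup_all_paths. Qed.

Definition W (n p q : nat) := list_prod (B n p) (B n q).

Lemma length_W n p q : length (W n p q) = (binom n p * binom n q)%nat.
Proof. unfold W. rewrite length_prod, !length_B. reflexivity. Qed.

Lemma in_W n p q y : In y (W n p q) <-> length (fst y) = n /\ ct (fst y) = p /\ length (snd y) = n /\ ct (snd y) = q.
Proof. destruct y. unfold W. rewrite in_prod_iff, !in_B. simpl. tauto. Qed.

Lemma nodup_prod {A C} (l : list A) (l' : list C) : NoDup l -> NoDup l' -> NoDup (list_prod l l').
Proof.
  induction 1; intros H'; simpl. constructor.
  apply NoDup_app; auto.
  - apply NoDup_map_NoDup_ForallPairs; auto. intros u v _ _ E; injection E; auto.
  - intros [u v] H1 H2. apply in_map_iff in H1. destruct H1 as [w [E _]]. injection E as <- <-.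
    apply in_prod_iff in H2. tauto.
Qed.

Lemma nodup_W n p q : NoDup (W n p q).
Proof. apply nodup_prod; apply nodup_B. Qed.

Section PartB.
Local Open Scope Z_scope.

Definition b2z (b : bool) : Z := if b then 1 else 0.

Fixpoint steps (a q : list bool) : list Z :=
  match a, q with
  | x :: a', y :: q' => (b2z x - b2z y) :: steps a' q'
  | _, _ => []
  end.

Fixpoint mx (l : list Z) : Z :=
  match l with [] => 0 | d :: l' => Z.max 0 (d + mx l') end.

Fixpoint sumz (l : list Z) : Z :=
  match l with [] => 0 | d :: l' => d + sumz l' end.

Fixpoint gdf (v : Z) (l : list Z) : bool :=
  match l with [] => true | d :: l' => (1 <=? v + d) && gdf (v + d) l' end.

Fixpoint fh (h : Z) (l : list Z) : nat :=
  match l with [] => O | d :: l' => if Z.eqb h 0 then O else S (fh (h - d) l') end.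

Lemma mx_nonneg l : 0 <= mx l.
Proof. destruct l; simpl; lia. Qed.

Lemma mx_ge_sum l : sumz l <= mx l.
Proof. induction l; simpl; lia. Qed.

Lemma sumz_app u w : sumz (u ++ w) = sumz u + sumz w.
Proof. induction u; simpl; lia. Qed.

Lemma mx_app u w : mx (u ++ w) = Z.max (mx u) (sumz u + mx w).
Proof. induction u; simpl. pose proof (mx_nonneg w); lia. rewrite IHu. pose proof (mx_nonneg u). lia. Qed.

Lemma sumz_opp l : sumz (map Z.opp l) = - sumz l.
Proof. induction l; simpl; lia. Qed.

Lemma ct_app a b : ct (a ++ b) = (ct a + ct b)%nat.
Proof. induction a; simpl; lia. Qed.

Lemma ct_firstn_skipn t a : (ct (firstn t a) + ct (skipn t a))%nat = ct a.
Proof. rewrite <- ct_app, firstn_skipn. reflexivity. Qed.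

Lemma ct_le_length a : (ct a <= length a)%nat.
Proof. induction a as [|[] a]; simpl; lia. Qed.

Lemma ct_cons x a : Z.of_nat (ct (x :: a)) = b2z x + Z.of_nat (ct a).
Proof. destruct x; cbn [ct b2z]; lia. Qed.

Lemma sumz_steps a q : length a = length q -> sumz (steps a q) = Z.of_nat (ct a) - Z.of_nat (ct q).
Proof.
  revert q; induction a as [|x a IH]; intros [|y q] H; cbn [length steps sumz] in *; try lia.
  rewrite IH by lia. rewrite !ct_cons. lia.
Qed.

Lemma mx_steps_le a q : mx (steps a q) <= Z.of_nat (ct a).
Proof.
  revert q; induction a as [|x a IH]; intros [|y q]; cbn [steps mx]; try lia.
  specialize (IH q). rewrite ct_cons. destruct x, y; unfold b2z; lia.
Qed.

Lemma steps_app a1 a2 q1 q2 : length a1 = length q1 ->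
  steps (a1 ++ a2) (q1 ++ q2) = steps a1 q1 ++ steps a2 q2.
Proof.
  revert q1; induction a1 as [|x a1 IH]; intros [|y q1] H; simpl in *; try lia; auto.
  rewrite IH by lia. reflexivity.
Qed.

Lemma steps_firstn t a q : steps (firstn t a) (firstn t q) = firstn t (steps a q).
Proof.
  revert a q; induction t; intros [|x a] [|y q]; simpl; auto.
  rewrite IHt; auto.
Qed.

Lemma steps_skipn t a q : steps (skipn t a) (skipn t q) = skipn t (steps a q).
Proof.
  revert a q; induction t; intros [|x a] [|y q]; simpl; auto.
  destruct (skipn t a); auto.
Qed.

Lemma steps_swap a q : steps q a = map Z.opp (steps a q).
Proof.
  revert q; induction a as [|x a IH]; intros [|y q]; simpl; auto.
  rewrite IH. f_equal. destruct x, y; simpl; lia.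
Qed.

Lemma steps_le1 a q d : In d (steps a q) -> d <= 1.
Proof.
  revert q; induction a as [|x a IH]; intros [|y q]; simpl; try tauto.
  intros [<-|H]; eauto. destruct x, y; simpl; lia.
Qed.

Lemma length_steps a q : length a = length q -> length (steps a q) = length a.
Proof.
  revert q; induction a as [|x a IH]; intros [|y q] H; simpl in *; try lia. rewrite IH; lia.
Qed.

Definition rotl {A} (r : nat) (l : list A) := skipn r l ++ firstn r l.

Lemma length_rotl {A} r (l : list A) : length (rotl r l) = length l.
Proof.
  unfold rotl. rewrite length_app, length_skipn, length_firstn. lia.
Qed.

Lemma ct_rotl r a : ct (rotl r a) = ct a.
Proof. unfold rotl. rewrite ct_app. rewrite <- (ct_firstn_skipn r a). lia. Qed.

Lemma steps_rotl r a q : length a = length q ->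
  steps (rotl r a) (rotl r q) = rotl r (steps a q).
Proof.
  intros H. unfold rotl. rewrite steps_app.
  - rewrite steps_skipn, steps_firstn. reflexivity.
  - rewrite !length_skipn. lia.
Qed.

Lemma rot_range r l : sumz l = 1 ->
  mx l - 1 <= mx (rotl r l) + mx (map Z.opp (rotl r l)).
Proof.
  intros Hs. unfold rotl.
  rewrite <- (firstn_skipn r l) in Hs at 1.
  rewrite <- (firstn_skipn r l) at 1.
  set (u := firstn r l) in *. set (w := skipn r l) in *.
  rewrite sumz_app in Hs.
  rewrite map_app, !mx_app, sumz_opp.
  pose proof (mx_nonneg u). pose proof (mx_nonneg w).
  pose proof (mx_ge_sum (map Z.opp u)). pose proof (mx_ge_sum (map Z.opp w)).
  rewrite sumz_opp in *.
  pose proof (mx_nonneg (map Z.opp u)). pose proof (mx_nonneg (map Z.opp w)).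
  lia.
Qed.

End PartB.

Section PartC.
Local Open Scope Z_scope.

Definition ps (j : nat) (l : list Z) := sumz (firstn j l).

Lemma gdf_iff v l : gdf v l = true <-> (forall j, (1 <= j <= length l)%nat -> 1 <= v + ps j l).
Proof.
  revert v; induction l as [|d l IH]; intros v; cbn [gdf length].
  - split; auto. intros _ j Hj; lia.
  - rewrite andb_true_iff, Z.leb_le, IH. unfold ps. split.
    + intros [H1 H2] j Hj. destruct j as [|[|j]]; try lia.
      * cbn [firstn sumz]. lia.
      * specialize (H2 (S j)). cbn [firstn sumz]. cbn [firstn sumz] in H2. lia.
    + intros H. split.
      * specialize (H 1%nat). cbn [firstn sumz] in H. lia.
      * intros j Hj. specialize (H (S j)). cbn [firstn sumz] in H. lia.
Qed.

Lemma firstn_add {A} r i (l : list A) : firstn (r + i) l = firstn r l ++ firstn i (skipn r l).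
Proof. revert l; induction r; intros [|x l]; simpl; auto. destruct i; auto. rewrite IHr; auto. Qed.

Lemma ps_skip r l : sumz l = ps r l + sumz (skipn r l).
Proof. unfold ps. rewrite <- sumz_app, firstn_skipn. reflexivity. Qed.

Lemma good_unique l d : sumz l = 1 -> gdf 0 l = true -> gdf 0 (rotl d l) = true ->
  (0 < d < length l)%nat -> False.
Proof.
  intros Hs H1 H2 Hd. rewrite gdf_iff in H1, H2.
  specialize (H1 d ltac:(lia)).
  rewrite length_rotl in H2. specialize (H2 (length l - d)%nat ltac:(lia)).
  unfold ps, rotl in H2. rewrite firstn_app, length_skipn in H2.
  replace (length l - d - (length l - d))%nat with 0%nat in H2 by lia.
  rewrite firstn_all2 in H2 by (rewrite length_skipn; lia).
  simpl in H2. rewrite app_nil_r in H2.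
  pose proof (ps_skip d l). lia.
Qed.

Lemma argmin_last (f : nat -> Z) m : exists r, (r <= m)%nat /\ (forall j, (j <= m)%nat -> f r <= f j) /\
  (forall j, (r < j <= m)%nat -> f r < f j).
Proof.
  induction m.
  - exists 0%nat. split; [lia|]. split; intros j Hj; [replace j with 0%nat by lia; lia| lia].
  - destruct IHm as [r [Hr [H1 H2]]].
    destruct (Z_le_gt_dec (f (S m)) (f r)).
    + exists (S m). split; [lia|]. split.
      * intros j Hj. destruct (Nat.eq_dec j (S m)); [subst; lia|]. specialize (H1 j ltac:(lia)). lia.
      * intros; lia.
    + exists r. split; [lia|]. split.
      * intros j Hj. destruct (Nat.eq_dec j (S m)); [subst; lia|]. apply H1; lia.
      * intros j Hj. destruct (Nat.eq_dec j (S m)); [subst; lia|]. apply H2; lia.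
Qed.

Lemma ps_all l : ps (length l) l = sumz l.
Proof. unfold ps. rewrite firstn_all. reflexivity. Qed.

Lemma good_exists l : sumz l = 1 -> (0 < length l)%nat ->
  exists r, (r < length l)%nat /\ gdf 0 (rotl r l) = true.
Proof.
  intros Hs Hn. set (n := length l) in *.
  destruct (argmin_last (fun j => ps j l) (n - 1)) as [r [Hr [H1 H2]]].
  exists r. split; [lia|]. apply gdf_iff. rewrite length_rotl. intros i Hi.
  unfold ps at 1, rotl. rewrite firstn_app, length_skipn. fold n.
  rewrite sumz_app.
  pose proof (H1 0%nat ltac:(lia)) as H0. unfold ps in H0 at 2. simpl in H0.
  destruct (le_lt_dec i (n - r)) as [Hi2|Hi2].
  - replace (i - (n - r))%nat with 0%nat by lia. simpl.
    assert (E: ps (r + i) l = ps r l + sumz (firstn i (skipn r l))).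
    { unfold ps. rewrite firstn_add, sumz_app. reflexivity. }
    destruct (Nat.eq_dec (r + i) n) as [Heq|Hne].
    + rewrite Heq in E. unfold n in E. rewrite ps_all in E. lia.
    + specialize (H2 (r + i)%nat ltac:(lia)). lia.
  - rewrite firstn_all2 by (rewrite length_skipn; lia).
    rewrite firstn_firstn. rewrite Nat.min_l by lia.
    pose proof (ps_skip r l).
    specialize (H1 (i - (n - r))%nat ltac:(lia)). unfold ps in H1 at 2. lia.
Qed.

Definition refl (t : nat) (y : list bool * list bool) :=
  (firstn t (fst y) ++ skipn t (snd y), firstn t (snd y) ++ skipn t (fst y)).

Lemma fhA l h : 0 <= h -> h <= mx l -> (forall d, In d l -> d <= 1) ->
  (fh h l <= length l)%nat /\ sumz (firstn (fh h l) l) = h.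
Proof.
  revert h; induction l as [|d l IH]; intros h H0 H1 H2; cbn [fh mx length] in *.
  - simpl. lia.
  - destruct (Z.eqb_spec h 0).
    + simpl. lia.
    + assert (d <= 1) by (apply H2; left; auto).
      destruct (IH (h - d)) as [IH1 IH2]; try lia. intros; apply H2; right; auto.
      split; [lia|]. cbn [firstn sumz]. lia.
Qed.

Lemma fhB l h w : sumz (firstn (fh h l) l) = h -> fh h (firstn (fh h l) l ++ w) = fh h l.
Proof.
  revert h; induction l as [|d l IH]; intros h H; cbn [fh] in *.
  - simpl in *. subst. destruct w; simpl; auto.
  - destruct (Z.eqb_spec h 0).
    + simpl. subst. destruct w; simpl; auto.
    + cbn [firstn sumz app] in *. cbn [fh]. rewrite (proj2 (Z.eqb_neq h 0) n).
      rewrite IH by lia. reflexivity.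
Qed.

Lemma steps_refl t a q : length a = length q ->
  steps (fst (refl t (a,q))) (snd (refl t (a,q))) = firstn t (steps a q) ++ map Z.opp (skipn t (steps a q)).
Proof.
  intros H. simpl. rewrite steps_app by (rewrite !length_firstn; lia).
  rewrite steps_firstn, (steps_swap (skipn t a) (skipn t q)), steps_skipn. reflexivity.
Qed.

Lemma refl_aux {A} t (x y z : list A) : (t <= length x)%nat -> (t <= length z)%nat ->
  firstn t (firstn t x ++ y) ++ skipn t (firstn t z ++ skipn t x) = x.
Proof.
  intros Hx Hz.
  rewrite firstn_app, skipn_app, !length_firstn, !Nat.min_l by lia.
  rewrite Nat.sub_diag, firstn_firstn, Nat.min_id. simpl.
  rewrite skipn_all2 by (rewrite length_firstn; lia). simpl.
  rewrite app_nil_r, firstn_skipn. reflexivity.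
Qed.

Lemma refl_inv t a q : (t <= length a)%nat -> (t <= length q)%nat -> refl t (refl t (a,q)) = (a,q).
Proof.
  intros Ha Hq. unfold refl; simpl. f_equal; apply refl_aux; auto.
Qed.

Lemma refl_count s p q0 h (L : list (list bool * list bool)) :
  NoDup L -> (h <= p)%nat ->
  (forall y, In y L -> In y (W s p q0) /\ Z.of_nat h <= mx (steps (fst y) (snd y))) ->
  (length L <= binom s (q0 + h) * binom s (p - h))%nat.
Proof.
  intros Hnd Hhp HL.
  set (phi := fun y : list bool * list bool => refl (fh (Z.of_nat h) (steps (fst y) (snd y))) y).
  assert (Key: forall y, In y L ->
    (fh (Z.of_nat h) (steps (fst y) (snd y)) <= s)%nat /\
    sumz (firstn (fh (Z.of_nat h) (steps (fst y) (snd y))) (steps (fst y) (snd y))) = Z.of_nat h /\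
    fh (Z.of_nat h) (steps (fst (phi y)) (snd (phi y))) = fh (Z.of_nat h) (steps (fst y) (snd y))).
  { intros [a q] Hy. destruct (HL _ Hy) as [HW Hm]. apply in_W in HW. simpl in HW. simpl in Hm.
    destruct HW as [La [Ca [Lq Cq]]].
    destruct (fhA (steps a q) (Z.of_nat h)) as [F1 F2]; try lia.
    { intros d; apply steps_le1. }
    rewrite length_steps in F1 by lia.
    simpl fst; simpl snd. split; [lia|]. split; auto.
    pose proof (steps_refl (fh (Z.of_nat h) (steps a q)) a q ltac:(lia)) as SR. simpl in SR.
    unfold phi. simpl. rewrite SR. apply fhB. auto. }
  assert (HinW: forall y, In y L -> In (phi y) (W s (q0 + h) (p - h))).
  { intros [a q] Hy. destruct (Key _ Hy) as [K1 [K2 _]]. destruct (HL _ Hy) as [HW _].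
    apply in_W in HW. simpl in HW. destruct HW as [La [Ca [Lq Cq]]].
    simpl in K1, K2. unfold phi. apply in_W. simpl.
    set (t := fh (Z.of_nat h) (steps a q)) in *.
    rewrite <- steps_firstn in K2. rewrite sumz_steps in K2 by (rewrite !length_firstn; lia).
    pose proof (ct_firstn_skipn t a). pose proof (ct_firstn_skipn t q).
    rewrite !length_app, !length_firstn, !length_skipn, !ct_app. lia. }
  assert (Hnd2: NoDup (map phi L)).
  { apply NoDup_map_NoDup_ForallPairs; auto.
    intros x y Hx Hy E.
    destruct (Key _ Hx) as [Kx1 [_ Kx3]]. destruct (Key _ Hy) as [Ky1 [_ Ky3]].
    assert (Et : fh (Z.of_nat h) (steps (fst x) (snd x)) = fh (Z.of_nat h) (steps (fst y) (snd y))).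
    { rewrite <- Kx3, <- Ky3, E. reflexivity. }
    destruct (HL _ Hx) as [Wx _]. destruct (HL _ Hy) as [Wy _].
    apply in_W in Wx, Wy. destruct x as [a q], y as [a' q']. cbn [fst snd] in *.
    unfold phi in E. cbv beta in E. cbn [fst snd] in E. rewrite Et in E.
    set (T := fh (Z.of_nat h) (steps a' q')) in *.
    transitivity (refl T (refl T (a,q))). symmetry; apply refl_inv; lia.
    transitivity (refl T (refl T (a',q'))). 2: apply refl_inv; lia.
    rewrite E. reflexivity. }
  pose proof (NoDup_incl_length Hnd2 (l' := W s (q0 + h) (p - h))) as HH.
  rewrite length_map, length_W in HH. apply HH.
  intros z Hz. apply in_map_iff in Hz. destruct Hz as [y [<- Hy]]. auto.
Qed.

End PartC.

Section PartD.
Local Open Scope Z_scope.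

Fixpoint odds (p : list bool) : list bool :=
  match p with o :: e :: r => o :: odds r | _ => [] end.
Fixpoint encQ (prev : bool) (p : list bool) : list bool :=
  match p with o :: e :: r => negb prev :: encQ e r | _ => [] end.
Fixpoint lastev (prev : bool) (p : list bool) : bool :=
  match p with o :: e :: r => lastev e r | _ => prev end.
Definition enc (p : list bool) := (odds p, encQ true p).

Lemma len_odds n p : length p = (2 * n)%nat -> length (odds p) = n.
Proof.
  revert p; induction n; intros [|o [|e r]] H; simpl in *; try lia. rewrite (IHn r); lia.
Qed.

Lemma len_encQ n p prev : length p = (2 * n)%nat -> length (encQ prev p) = n.
Proof.
  revert p prev; induction n; intros [|o [|e r]] prev H; simpl in *; try lia. rewrite (IHn r); lia.
Qed.

Lemma ups_odds n p : length p = (2 * n)%nat -> ups_at_odd true p = ct (odds p).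
Proof.
  revert p; induction n; intros [|o [|e r]] H; simpl in *; try lia. rewrite (IHn r) by lia.
  destruct o; reflexivity.
Qed.

Lemma heights_nonneg n p : forall v prev hh, length p = (2 * n)%nat -> hh = 2 * (v - b2z (negb prev)) ->
  forallb (fun h => 0 <=? h) (heights_from hh p) = gdf v (steps (odds p) (encQ prev p)).
Proof.
  revert p; induction n; intros [|o [|e r]] v prev hh H Hh; simpl in H; try lia.
  - reflexivity.
  - cbn [heights_from odds encQ steps gdf forallb].
    rewrite (IHn r (v + (b2z o - b2z (negb prev))) e) by (try lia; destruct o, e, prev; cbn [negb b2z] in *; lia).
    destruct o, e, prev; cbn [negb b2z] in *;
    destruct (Z.leb_spec 0 (hh+1)), (Z.leb_spec 0 (hh-1)), (Z.leb_spec 0 (hh+1+1)), (Z.leb_spec 0 (hh+1-1)),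
      (Z.leb_spec 0 (hh-1+1)), (Z.leb_spec 0 (hh-1-1));
    repeat match goal with |- context [(1 <=? ?x)] => destruct (Z.leb_spec 1 x) end; simpl; try lia; try reflexivity.
Qed.

Lemma heights_max n p : forall v prev hh, length p = (2 * n)%nat -> hh = 2 * (v - b2z (negb prev)) ->
  fold_right Z.max 0 (heights_from hh p) <= Z.max 0 (2 * (v + mx (steps (odds p) (encQ prev p)))).
Proof.
  revert p; induction n; intros [|o [|e r]] v prev hh H Hh; simpl in H; try lia.
  - cbn [heights_from odds encQ steps mx fold_right]. lia.
  - cbn [heights_from odds encQ steps mx fold_right].
    pose proof (IHn r (v + (b2z o - b2z (negb prev))) e (if e then (if o then hh + 1 else hh - 1) + 1 else (if o then hh + 1 else hh - 1) - 1)) as IH.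
    assert (Hr : length r = (2 * n)%nat) by lia.
    specialize (IH Hr). pose proof (mx_nonneg (steps (odds r) (encQ e r))).
    destruct o, e, prev; cbn [negb b2z] in *; specialize (IH ltac:(lia)); lia.
Qed.

Lemma last_cons2 (x y : Z) l d : last (x :: y :: l) d = last (y :: l) d.
Proof. reflexivity. Qed.

Lemma heights_last n p : forall v prev hh, length p = (2 * n)%nat -> hh = 2 * (v - b2z (negb prev)) ->
  last (hh :: heights_from hh p) 0 = 2 * (v + sumz (steps (odds p) (encQ prev p))) - 2 * b2z (negb (lastev prev p)).
Proof.
  revert p; induction n; intros [|o [|e r]] v prev hh H Hh; simpl in H; try lia.
  - cbn [heights_from odds encQ steps sumz lastev last]. lia.
  - cbn [heights_from odds encQ steps sumz lastev].
    pose proof (IHn r (v + (b2z o - b2z (negb prev))) e (if e then (if o then hh + 1 else hh - 1) + 1 else (if o then hh + 1 else hh - 1) - 1)) as IH.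
    assert (Hr : length r = (2 * n)%nat) by lia.
    specialize (IH Hr).
    cbn [heights_from]. rewrite !last_cons2.
    rewrite IH by (destruct o, e, prev; cbn [negb b2z] in *; lia). lia.
Qed.

Lemma enc_inj n p p' prev : length p = (2 * n)%nat -> length p' = (2 * n)%nat ->
  odds p = odds p' -> encQ prev p = encQ prev p' -> lastev prev p = lastev prev p' -> p = p'.
Proof.
  revert p p' prev; induction n; intros [|o [|e r]] [|o' [|e' r']] prev H H' H1 H2 H3; simpl in *; try lia; auto.
  injection H1 as -> H1. injection H2 as H2.
  destruct r as [|x r].
  - destruct r' as [|x' r']; simpl in *; try lia. subst. reflexivity.
  - destruct r as [|y r]; simpl in H; try lia.
    destruct r' as [|x' [|y' r']]; simpl in H'; try lia. simpl in H2.
    injection H2 as H2a H2. assert (e = e') by (destruct e, e'; simpl in *; congruence). subst e'.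
    f_equal; f_equal. apply (IHn _ _ e); simpl; try lia; auto. f_equal; auto.
Qed.

Fixpoint ilv (a e : list bool) : list bool :=
  match a, e with x :: a', y :: e' => x :: y :: ilv a' e' | _, _ => [] end.

Lemma len_ilv a e : length a = length e -> length (ilv a e) = (2 * length a)%nat.
Proof. revert e; induction a; intros [|y e] H; simpl in *; try lia. rewrite IHa; lia. Qed.

Lemma odds_ilv a e : length a = length e -> odds (ilv a e) = a.
Proof. revert e; induction a; intros [|y e] H; simpl in *; try lia; auto. rewrite IHa; auto. Qed.

Lemma encQ_ilv a e prev : length a = length e -> (1 <= length a)%nat ->
  encQ prev (ilv a e) = negb prev :: map negb (removelast e).
Proof.
  revert e prev; induction a as [|x a IH]; intros [|y e] prev H H1; simpl in *; try lia.
  destruct a as [|x' a].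
  - destruct e; simpl in *; try lia. reflexivity.
  - destruct e as [|y' e]; simpl in *; try lia.
    specialize (IH (y' :: e) y ltac:(simpl; lia) ltac:(simpl; lia)). simpl in IH. rewrite IH. reflexivity.
Qed.

Lemma last_indep {A} (z : A) l d d' : last (z :: l) d = last (z :: l) d'.
Proof. revert z; induction l; intros z; [reflexivity|]. change (last (a :: l) d = last (a :: l) d'). apply IHl. Qed.

Lemma lastev_ilv a e prev : length a = length e -> lastev prev (ilv a e) = last e prev.
Proof.
  revert e prev; induction a as [|x a IH]; intros [|y e] prev H; simpl in *; try lia; auto.
  rewrite IH by lia. destruct e; auto. apply last_indep.
Qed.

Definition dec (a q : list bool) := ilv a (map negb (tl q) ++ [false]).

End PartD.

Section PartE.
Local Open Scope Z_scope.

Lemma in_X s k p : In p (X s k) <-> length p = (2 * s)%nat /\ is_dyck p = true /\ odd_ups p = k.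
Proof.
  unfold X. rewrite filter_In, in_all_paths, andb_true_iff, Nat.eqb_eq. tauto.
Qed.

Lemma nodup_X s k : NoDup (X s k).
Proof. apply NoDup_filter, nodup_all_paths. Qed.

Lemma X_fwd s k p : (1 <= s)%nat -> In p (X s k) ->
  In (enc p) (W s k (k - 1)) /\ gdf 0 (steps (odds p) (encQ true p)) = true /\
  lastev true p = false /\ (1 <= k)%nat /\
  max_height p <= 2 * mx (steps (odds p) (encQ true p)) /\ sumz (steps (odds p) (encQ true p)) = 1.
Proof.
  intros Hs Hp. apply in_X in Hp. destruct Hp as [Hl [Hd Hk]].
  unfold is_dyck in Hd. apply andb_true_iff in Hd. destruct Hd as [Hd1 Hd2].
  apply Z.eqb_eq in Hd2.
  pose proof (len_odds s p Hl) as La. pose proof (len_encQ s p true Hl) as Lq.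
  assert (G : gdf 0 (steps (odds p) (encQ true p)) = true).
  { rewrite <- (heights_nonneg s p 0 true 0); auto. }
  assert (Ls : length (steps (odds p) (encQ true p)) = s) by (rewrite length_steps; lia).
  assert (S1 : 1 <= sumz (steps (odds p) (encQ true p))).
  { pose proof G as G'. rewrite gdf_iff in G'. specialize (G' s ltac:(lia)).
    rewrite <- Ls in G'. rewrite ps_all in G'. lia. }
  pose proof (heights_last s p 0 true 0 Hl eq_refl) as HL. rewrite Hd2 in HL.
  assert (E1 : sumz (steps (odds p) (encQ true p)) = 1 /\ lastev true p = false).
  { destruct (lastev true p); cbn [negb b2z] in HL; split; auto; lia. }
  destruct E1 as [E1 E2].
  rewrite sumz_steps in E1 by lia.
  unfold odd_ups in Hk. rewrite (ups_odds s p Hl) in Hk.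
  split; [|split; [auto|split; [auto|split; [lia|split]]]].
  - apply in_W. unfold enc; simpl. repeat split; try lia.
  - pose proof (heights_max s p 0 true 0 Hl eq_refl) as HM.
    pose proof (mx_nonneg (steps (odds p) (encQ true p))). unfold max_height. lia.
  - rewrite sumz_steps by lia. lia.
Qed.

Lemma X_bwd s k y : (1 <= s)%nat -> (1 <= k)%nat -> In y (W s k (k - 1)) ->
  gdf 0 (steps (fst y) (snd y)) = true -> exists p, In p (X s k) /\ enc p = y.
Proof.
  intros Hs Hk Hy G. destruct y as [a q]. apply in_W in Hy. simpl in *.
  destruct Hy as [La [Ca [Lq Cq]]].
  destruct a as [|x a]; simpl in La; try lia. destruct q as [|z q]; simpl in Lq; try lia.
  assert (Hz : z = false).
  { cbn [steps gdf] in G. apply andb_true_iff in G. destruct G as [G _]. apply Z.leb_le in G.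
    destruct x, z; cbn [b2z] in G; auto; lia. }
  subst z.
  set (e := map negb q ++ [false]).
  assert (Le : length e = S (length a)) by (unfold e; rewrite length_app, length_map; simpl; lia).
  exists (dec (x :: a) (false :: q)). unfold dec. simpl tl. fold e.
  assert (Od : odds (ilv (x :: a) e) = x :: a) by (apply odds_ilv; simpl; lia).
  assert (Eq : encQ true (ilv (x :: a) e) = false :: q).
  { rewrite encQ_ilv by (simpl; lia). unfold e. rewrite removelast_last, map_map.
    simpl. f_equal. rewrite <- (map_id q) at 2. apply map_ext. intros []; reflexivity. }
  assert (Lv : lastev true (ilv (x :: a) e) = false).
  { rewrite lastev_ilv by (simpl; lia). unfold e. apply last_last. }
  assert (Len : length (ilv (x :: a) e) = (2 * s)%nat) by (rewrite len_ilv; simpl; lia).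
  split.
  - apply in_X. split; auto. split.
    + unfold is_dyck. apply andb_true_iff. split.
      * rewrite (heights_nonneg s _ 0 true 0 Len eq_refl). rewrite Od, Eq. exact G.
      * apply Z.eqb_eq. rewrite (heights_last s _ 0 true 0 Len eq_refl). rewrite Od, Eq, Lv.
        rewrite sumz_steps by (simpl; lia). simpl b2z. lia.
    + unfold odd_ups. rewrite (ups_odds s _ Len), Od. auto.
  - unfold enc. rewrite Od, Eq. reflexivity.
Qed.

Lemma rotl_add {A} a b (l : list A) : (a + b <= length l)%nat -> rotl a (rotl b l) = rotl (a + b) l.
Proof.
  intros H. unfold rotl. rewrite skipn_app, firstn_app, length_skipn.
  replace (a - (length l - b))%nat with 0%nat by lia. simpl. rewrite app_nil_r.
  rewrite skipn_skipn, <- app_assoc. f_equal. rewrite Nat.add_comm, firstn_add. reflexivity.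
Qed.

Lemma rotl_full {A} (l : list A) : rotl (length l) l = l.
Proof. unfold rotl. rewrite skipn_all2, firstn_all by lia. reflexivity. Qed.

Lemma rotl_0 {A} (l : list A) : rotl 0 l = l.
Proof. unfold rotl. simpl. apply app_nil_r. Qed.

Definition rot (r : nat) (y : list bool * list bool) := (rotl r (fst y), rotl r (snd y)).

Lemma rot_W s p q r y : In y (W s p q) -> In (rot r y) (W s p q).
Proof.
  intros H. apply in_W in H. apply in_W. destruct y; simpl in *.
  rewrite !length_rotl, !ct_rotl. auto.
Qed.

Lemma rot_steps r y : length (fst y) = length (snd y) ->
  steps (fst (rot r y)) (snd (rot r y)) = rotl r (steps (fst y) (snd y)).
Proof. intros H. destruct y; simpl in *. apply steps_rotl; auto. Qed.

End PartE.

Section PartF.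
Local Open Scope Z_scope.

Lemma inj_core s k p p' r r' : (1 <= s)%nat -> In p (X s k) -> In p' (X s k) -> (r <= r' < s)%nat ->
  rot r (enc p) = rot r' (enc p') -> p = p' /\ r = r'.
Proof.
  intros Hs Hp Hp' Hr E.
  pose proof (X_fwd s k p Hs Hp) as [W1 [G1 [L1 [K1 [_ S1]]]]].
  pose proof (X_fwd s k p' Hs Hp') as [W2 [G2 [L2 [K2 [_ S2]]]]].
  apply in_W in W1, W2. unfold enc in *; simpl in W1, W2.
  destruct W1 as [La [_ [Lq _]]]. destruct W2 as [La' [_ [Lq' _]]].
  unfold rot, enc in E. simpl in E. injection E as Ea Eq.
  set (d := (s - r' + r)%nat).
  assert (Ha' : encQ true p' = rotl d (encQ true p) /\ odds p' = rotl d (odds p)).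
  { split.
    - rewrite <- (rotl_full (encQ true p')) at 1. rewrite Lq'. replace s with (s - r' + r')%nat at 1 by lia.
      rewrite <- rotl_add by lia. rewrite <- Eq. unfold d. rewrite rotl_add by lia. reflexivity.
    - rewrite <- (rotl_full (odds p')) at 1. rewrite La'. replace s with (s - r' + r')%nat at 1 by lia.
      rewrite <- rotl_add by lia. rewrite <- Ea. unfold d. rewrite rotl_add by lia. reflexivity. }
  destruct Ha' as [Hq Ha].
  destruct (Nat.eq_dec r r') as [<-|Hne].
  - unfold d in *. replace (s - r + r)%nat with s in * by lia.
    rewrite <- La in Ha at 1. rewrite <- Lq in Hq at 1. rewrite rotl_full in Ha, Hq.
    split; auto. symmetry. apply (enc_inj s p' p true); try lia; auto.
    + apply in_X in Hp'. tauto.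
    + apply in_X in Hp. tauto.
    + congruence.
  - exfalso. apply (good_unique (steps (odds p) (encQ true p)) d); auto.
    + rewrite <- steps_rotl by lia. rewrite <- Ha, <- Hq. auto.
    + rewrite length_steps by lia. unfold d. lia.
Qed.

Lemma tail_count s k H m : (1 <= s)%nat -> (4 * H + 2 <= m)%nat ->
  (length (filter (fun p => (Z.of_nat m <=? max_height p)%Z) (X s k)) * s <=
   length (filter (fun y => (Z.of_nat H <=? mx (steps (fst y) (snd y)))%Z) (W s k (k-1))) +
   length (filter (fun y => (Z.of_nat H <=? mx (steps (snd y) (fst y)))%Z) (W s k (k-1))))%nat.
Proof.
  intros Hs Hm.
  set (T := filter (fun p => (Z.of_nat m <=? max_height p)%Z) (X s k)).
  set (L1 := list_prod T (seq 0 s)).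
  set (phi := fun pr : list bool * nat => rot (snd pr) (enc (fst pr))).
  assert (HL1 : forall p r, In (p, r) L1 -> In p (X s k) /\ Z.of_nat m <= max_height p /\ (r < s)%nat).
  { intros p r H1. unfold L1 in H1. apply in_prod_iff in H1. destruct H1 as [H1 H2].
    unfold T in H1. apply filter_In in H1. apply in_seq in H2. destruct H1 as [H1 H3].
    apply Z.leb_le in H3. repeat split; auto; lia. }
  assert (Hnd : NoDup (map phi L1)).
  { apply NoDup_map_NoDup_ForallPairs.
    - intros [p r] [p' r'] H1 H2 E. apply HL1 in H1, H2. unfold phi in E; simpl in E.
      destruct (le_lt_dec r r').
      + destruct (inj_core s k p p' r r') as [-> ->]; tauto.
      + destruct (inj_core s k p' p r' r) as [-> ->]; try tauto; auto. lia.
    - apply nodup_prod. apply NoDup_filter, nodup_X. apply seq_NoDup. }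
  pose proof (NoDup_incl_length Hnd (l' := filter (fun y => (Z.of_nat H <=? mx (steps (fst y) (snd y)))%Z) (W s k (k-1)) ++
     filter (fun y => (Z.of_nat H <=? mx (steps (snd y) (fst y)))%Z) (W s k (k-1)))) as HH.
  rewrite length_map, length_app in HH. unfold L1 in HH. rewrite length_prod, length_seq in HH.
  apply HH. clear HH.
  intros y Hy. apply in_map_iff in Hy. destruct Hy as [[p r] [<- Hpr]].
  apply HL1 in Hpr. destruct Hpr as [Hp [Hmp Hr]].
  pose proof (X_fwd s k p Hs Hp) as [W1 [G1 [L1' [K1 [M1 S1]]]]].
  pose proof (rot_range r _ S1) as RR.
  unfold phi; simpl.
  pose proof W1 as W1'. apply in_W in W1'. unfold enc in W1'; simpl in W1'.
  assert (Est : steps (fst (rot r (enc p))) (snd (rot r (enc p))) = rotl r (steps (odds p) (encQ true p))).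
  { rewrite rot_steps; auto. simpl. lia. }
  apply in_app_iff.
  destruct (Z_le_gt_dec (Z.of_nat H) (mx (steps (fst (rot r (enc p))) (snd (rot r (enc p)))))) as [B1|B1].
  - left. apply filter_In. split. apply rot_W; auto. apply Z.leb_le; auto.
  - right. apply filter_In. split. apply rot_W; auto. apply Z.leb_le.
    rewrite steps_swap, Est. rewrite Est in B1. lia.
Qed.

Lemma X_lower s k : (1 <= s)%nat -> (1 <= k)%nat ->
  (binom s k * binom s (k - 1) <= length (X s k) * s)%nat.
Proof.
  intros Hs Hk. rewrite <- length_W.
  set (L := list_prod (X s k) (seq 0 s)).
  set (phi := fun pr : list bool * nat => rot (snd pr) (enc (fst pr))).
  pose proof (NoDup_incl_length (nodup_W s k (k-1)) (l' := map phi L)) as HH.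
  rewrite length_map in HH. unfold L in HH. rewrite length_prod, length_seq in HH.
  apply HH. clear HH.
  intros [a q] Hy. pose proof Hy as Hy'. apply in_W in Hy'. simpl in Hy'.
  destruct Hy' as [La [Ca [Lq Cq]]].
  assert (S1 : sumz (steps a q) = 1) by (rewrite sumz_steps; lia).
  destruct (good_exists (steps a q) S1) as [r0 [Hr0 G0]]. rewrite length_steps; lia.
  rewrite length_steps in Hr0 by lia.
  assert (HG : In (rot r0 (a, q)) (W s k (k-1))) by (apply rot_W; auto).
  destruct (X_bwd s k (rot r0 (a,q)) Hs Hk HG) as [p [Hp Ep]].
  { rewrite rot_steps; auto. simpl; lia. }
  apply in_map_iff.
  destruct (Nat.eq_dec r0 0) as [E0|E0].
  - exists (p, 0%nat). split.
    + unfold phi; simpl. rewrite Ep. subst r0. unfold rot; simpl. rewrite !rotl_0. reflexivity.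
    + apply in_prod_iff. split; auto. apply in_seq. lia.
  - exists (p, (s - r0)%nat). split.
    + unfold phi; simpl. rewrite Ep. unfold rot; simpl. rewrite !rotl_add by lia.
      replace (s - r0 + r0)%nat with s by lia. rewrite <- La at 1. rewrite rotl_full.
      rewrite <- Lq. rewrite rotl_full. reflexivity.
    + apply in_prod_iff. split; auto. apply in_seq. lia.
Qed.

Lemma filter_nil_len {A} (P : A -> bool) l : (forall y, In y l -> P y = false) -> length (filter P l) = 0%nat.
Proof. intros H. induction l; simpl; auto. rewrite H by (left; auto). apply IHl. intros; apply H; right; auto. Qed.

Lemma bad1_bound s k H : (H <= k)%nat ->
  (length (filter (fun y => (Z.of_nat H <=? mx (steps (fst y) (snd y)))%Z) (W s k (k-1))) <=
   binom s (k - 1 + H) * binom s (k - H))%nat.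
Proof.
  intros HH. apply refl_count; auto. apply NoDup_filter, nodup_W.
  intros y Hy. apply filter_In in Hy. destruct Hy as [Hy1 Hy2]. apply Z.leb_le in Hy2. auto.
Qed.

Lemma bad1_zero s k H : (k < H)%nat ->
  length (filter (fun y => (Z.of_nat H <=? mx (steps (fst y) (snd y)))%Z) (W s k (k-1))) = 0%nat.
Proof.
  intros HH. apply filter_nil_len. intros [a q] Hy. apply in_W in Hy. simpl in *.
  pose proof (mx_steps_le a q). apply Z.leb_gt. lia.
Qed.

Lemma bad2_bound s k H : (H <= k - 1)%nat ->
  (length (filter (fun y => (Z.of_nat H <=? mx (steps (snd y) (fst y)))%Z) (W s k (k-1))) <=
   binom s (k + H) * binom s (k - 1 - H))%nat.
Proof.
  intros HH.
  set (L := filter (fun y => (Z.of_nat H <=? mx (steps (snd y) (fst y)))%Z) (W s k (k-1))).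
  set (sw := fun y : list bool * list bool => (snd y, fst y)).
  rewrite <- (length_map sw L).
  apply (refl_count s (k-1) k H); auto.
  - apply NoDup_map_NoDup_ForallPairs. intros [] [] _ _ E; unfold sw in E; simpl in E; congruence.
    apply NoDup_filter, nodup_W.
  - intros y Hy. apply in_map_iff in Hy. destruct Hy as [[a q] [<- Hy]].
    unfold L in Hy. apply filter_In in Hy. destruct Hy as [Hy1 Hy2]. apply Z.leb_le in Hy2.
    apply in_W in Hy1. simpl in *. split; auto. apply in_W. simpl. tauto.
Qed.

Lemma bad2_zero s k H : (k - 1 < H)%nat ->
  length (filter (fun y => (Z.of_nat H <=? mx (steps (snd y) (fst y)))%Z) (W s k (k-1))) = 0%nat.
Proof.
  intros HH. apply filter_nil_len. intros [a q] Hy. apply in_W in Hy. simpl in *.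
  pose proof (mx_steps_le q a). apply Z.leb_gt. lia.
Qed.

End PartF.

Section PartG.
Local Open Scope R_scope.

Lemma poly_ineq S J K : 1 <= K -> K <= J -> J + 1 <= S -> J + 1 <= 2*K - 1 ->
  (S - J) * (2*K - 1 - J) * S <= (S - (J - K + 1)) * ((J + 1) * (S - (2*K - 1 - J) + 1)).
Proof.
  intros H1 H2 H3 H4.
  assert (A1 : S * (2*K - 1 - J) <= (S - (J - K + 1)) * (J + 1)).
  { assert (0 <= (J - K + 1) * (2*S - J - 1)) by (apply Rmult_le_pos; lra). nra. }
  assert (A2 : S - J <= S - (2*K - 1 - J) + 1) by lra.
  assert (0 <= S - (J - K + 1)) by lra.
  assert (0 <= J + 1) by lra.
  assert (0 <= (S - (J - K + 1)) * (J + 1)) by (apply Rmult_le_pos; lra).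
  assert (0 <= S - J) by lra.
  assert (B1 : (S - J) * (S * (2*K - 1 - J)) <= (S - J) * ((S - (J - K + 1)) * (J + 1)))
    by (apply Rmult_le_compat_l; lra).
  assert (B2 : (S - J) * ((S - (J - K + 1)) * (J + 1)) <= (S - (2*K - 1 - J) + 1) * ((S - (J - K + 1)) * (J + 1)))
    by (apply Rmult_le_compat_r; lra).
  nra.
Qed.

Lemma ratio_real S J K C1 C1' C2 C2' :
  0 <= C1 -> 0 <= C2 -> 1 <= K -> K <= J -> J + 1 <= S -> J + 1 <= 2*K - 1 ->
  (J + 1) * C1' = (S - J) * C1 -> (2*K - 1 - J) * C2 = (S - (2*K - 1 - J) + 1) * C2' ->
  C1' * C2' <= C1 * C2 * (1 - (J - K + 1) / S).
Proof.
  intros HC1 HC2 H1 H2 H3 H4 E1 E2.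
  set (M := 2*K - 1 - J) in *.
  assert (EC1 : C1' = (S - J) * C1 / (J + 1)) by (rewrite <- E1; field; lra).
  assert (EC2 : C2' = M * C2 / (S - M + 1)) by (rewrite E2; field; unfold M; lra).
  rewrite EC1, EC2.
  set (P := (J + 1) * (S - M + 1)).
  assert (HP : 0 < P) by (unfold P, M; apply Rmult_lt_0_compat; lra).
  assert (HS : 0 < S) by lra.
  set (R1 := (S - J) * M / P). set (R2 := 1 - (J - K + 1) / S).
  assert (E3 : (S - J) * C1 / (J + 1) * (M * C2 / (S - M + 1)) = C1 * C2 * R1).
  { unfold R1, P. field. unfold M; lra. }
  rewrite E3. apply Rmult_le_compat_l. apply Rmult_le_pos; auto.
  assert (F1 : R1 * P = (S - J) * M) by (unfold R1; field; lra).
  assert (F2 : R2 * S = S - (J - K + 1)) by (unfold R2; field; lra).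
  pose proof (poly_ineq S J K H1 H2 H3 H4) as PI. fold M in PI. fold P in PI.
  assert (F3 : (R1 - R2) * (P * S) <= 0).
  { replace ((R1 - R2) * (P * S)) with ((R1 * P) * S - (R2 * S) * P) by ring.
    rewrite F1, F2. lra. }
  destruct (Rle_or_lt R1 R2); auto.
  assert (0 < (R1 - R2) * (P * S)) by (apply Rmult_lt_0_compat; [lra | apply Rmult_lt_0_compat; lra]). lra.
Qed.

Definition fb s k j := (binom s j * binom s (2 * k - 1 - j))%nat.

Lemma exp_mono x y : x <= y -> exp x <= exp y.
Proof. intros [H|H]. left; apply exp_increasing; auto. right; subst; auto. Qed.

Lemma fb_step s k j : (1 <= s)%nat -> (k <= j)%nat -> (j + 1 <= 2 * k - 1)%nat ->
  INR (fb s k (j + 1)) <= INR (fb s k j) * exp (- INR (j - k + 1) / INR s).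
Proof.
  intros Hs Hkj Hj. unfold fb.
  destruct (le_lt_dec (j + 1) s) as [Hjs|Hjs].
  2: { rewrite (binom_big s (j+1)) by lia. rewrite Nat.mul_0_l. simpl INR.
       apply Rmult_le_pos. apply pos_INR. left; apply exp_pos. }
  set (m := (2 * k - 1 - j)%nat).
  replace (2 * k - 1 - (j + 1))%nat with (m - 1)%nat by (unfold m; lia).
  pose proof (binom_succ s j) as E1. pose proof (binom_succ s (m - 1)) as E2.
  replace (m - 1 + 1)%nat with m in E2 by (unfold m; lia).
  apply (f_equal INR) in E1, E2. rewrite !mult_INR in E1, E2.
  rewrite minus_INR in E1 by lia. rewrite minus_INR in E2 by (unfold m; lia).
  rewrite plus_INR in E1. simpl INR in E1.
  rewrite !mult_INR.
  assert (Hm : INR m = 2 * INR k - 1 - INR j).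
  { unfold m. rewrite !minus_INR by lia. rewrite mult_INR. simpl. lra. }
  rewrite minus_INR in E2 by (unfold m; lia). simpl INR in E2.
  rewrite Hm in E2.
  assert (Hk1 : 1 <= INR k) by (apply (le_INR 1); lia).
  assert (HR := ratio_real (INR s) (INR j) (INR k) (INR (binom s j)) (INR (binom s (j + 1)))
                 (INR (binom s m)) (INR (binom s (m - 1))) (pos_INR _) (pos_INR _) Hk1).
  assert (Hkj' : INR k <= INR j) by (apply le_INR; lia).
  assert (Hjs' : INR j + 1 <= INR s) by (rewrite <- S_INR; apply le_INR; lia).
  assert (Hj' : INR j + 1 <= 2 * INR k - 1).
  { assert (INR (j + 1) <= INR (2 * k - 1)) by (apply le_INR; lia).
    rewrite plus_INR, minus_INR, mult_INR in H by lia. simpl in H. lra. }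
  specialize (HR Hkj' Hjs' Hj').
  assert (E2' : (2 * INR k - 1 - INR j) * INR (binom s m) = (INR s - (2 * INR k - 1 - INR j) + 1) * INR (binom s (m - 1))).
  { rewrite E2. ring. }
  specialize (HR E1 E2').
  eapply Rle_trans. apply HR.
  apply Rmult_le_compat_l. apply Rmult_le_pos; apply pos_INR.
  replace (INR (j - k + 1)) with (INR j - INR k + 1) by (rewrite plus_INR, minus_INR by lia; simpl; ring).
  replace (- (INR j - INR k + 1) / INR s) with (- ((INR j - INR k + 1) / INR s)) by (field; lra).
  pose proof (exp_ineq1_le (- ((INR j - INR k + 1) / INR s))). lra.
Qed.

Lemma fb_chain s k n : (1 <= s)%nat -> (1 <= k)%nat -> (n <= k - 1)%nat ->
  INR (fb s k (k + n)) <= INR (fb s k k) * exp (- INR n * (INR n + 1) / (2 * INR s)).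
Proof.
  intros Hs Hk. induction n; intros Hn.
  - rewrite Nat.add_0_r. simpl INR. replace (- 0 * (0 + 1) / (2 * INR s)) with 0 by (field; apply not_0_INR; lia).
    rewrite exp_0. lra.
  - replace (k + S n)%nat with (k + n + 1)%nat by lia.
    eapply Rle_trans. apply fb_step; lia.
    replace (k + n - k + 1)%nat with (S n) by lia.
    eapply Rle_trans. apply Rmult_le_compat_r. left; apply exp_pos. apply IHn; lia.
    rewrite Rmult_assoc, <- exp_plus. apply Rmult_le_compat_l. apply pos_INR.
    apply exp_mono. rewrite S_INR. right. field. apply not_0_INR. lia.
Qed.

End PartG.

Section PartH.
Local Open Scope R_scope.

Lemma X_k0 s : (1 <= s)%nat -> length (X s 0) = 0%nat.
Proof.
  intros Hs. destruct (X s 0) as [|p l] eqn:E; auto.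
  exfalso. assert (Hp : In p (X s 0)) by (rewrite E; left; auto).
  destruct (X_fwd s 0 p Hs Hp) as [_ [_ [_ [Hk _]]]]. lia.
Qed.

Lemma tail_real s k H m : (1 <= s)%nat -> (H = 0 \/ 4 * H + 2 <= m)%nat ->
  INR (length (filter (fun p => (Z.of_nat m <=? max_height p)%Z) (X s k))) <=
  2 * INR (length (X s k)) * exp (- (INR H - 1) * INR H / (2 * INR s)).
Proof.
  intros Hs HH.
  set (T := length (filter (fun p => (Z.of_nat m <=? max_height p)%Z) (X s k))).
  assert (HTX : (T <= length (X s k))%nat) by apply filter_length_le.
  assert (Hs' : 1 <= INR s) by (apply (le_INR 1); lia).
  set (E := exp (- (INR H - 1) * INR H / (2 * INR s))).
  assert (HE : 0 < E) by apply exp_pos.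
  destruct (Nat.eq_dec H 0) as [H0|H0].
  { subst H. unfold E. simpl INR. replace (- (0 - 1) * 0 / (2 * INR s)) with 0 by (field; lra).
    rewrite exp_0. apply le_INR in HTX. pose proof (pos_INR (length (X s k))). lra. }
  destruct HH as [HH|HH]; [lia|].
  destruct (Nat.eq_dec k 0) as [K0|K0].
  { subst k. rewrite X_k0 in * by auto. assert (T = 0%nat) by lia. rewrite H1. simpl. lra. }
  pose proof (tail_count s k H m Hs HH) as TC.
  pose proof (X_lower s k Hs ltac:(lia)) as XL.
  set (c1 := length (filter (fun y => (Z.of_nat H <=? mx (steps (fst y) (snd y)))%Z) (W s k (k-1)))) in *.
  set (c2 := length (filter (fun y => (Z.of_nat H <=? mx (steps (snd y) (fst y)))%Z) (W s k (k-1)))) in *.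
  set (Fk := INR (fb s k k)).
  assert (HF : Fk = INR (binom s k * binom s (k - 1))) by (unfold Fk, fb; do 3 f_equal; lia).
  assert (C1 : INR c1 <= Fk * E).
  { destruct (le_lt_dec H k) as [Hk|Hk].
    - eapply Rle_trans. apply le_INR, (bad1_bound s k H Hk).
      replace (binom s (k - 1 + H) * binom s (k - H))%nat with (fb s k (k + (H - 1))).
      2: { unfold fb. f_equal; f_equal; lia. }
      eapply Rle_trans. apply fb_chain; lia.
      unfold Fk, E. right. f_equal. f_equal. rewrite minus_INR by lia. simpl. field. lra.
    - unfold c1. rewrite bad1_zero by lia. simpl INR. apply Rmult_le_pos; [unfold Fk; apply pos_INR | lra]. }
  assert (C2 : INR c2 <= Fk * E).
  { destruct (le_lt_dec H (k - 1)) as [Hk|Hk].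
    - eapply Rle_trans. apply le_INR, (bad2_bound s k H Hk).
      replace (binom s (k + H) * binom s (k - 1 - H))%nat with (fb s k (k + H)).
      2: { unfold fb. f_equal; f_equal; lia. }
      eapply Rle_trans. apply fb_chain; lia.
      unfold Fk, E. apply Rmult_le_compat_l. apply pos_INR. apply exp_mono.
      assert (0 <= INR H) by apply pos_INR.
      unfold Rdiv. apply Rmult_le_compat_r. left; apply Rinv_0_lt_compat; lra. nra.
    - unfold c2. rewrite bad2_zero by lia. simpl INR. apply Rmult_le_pos; [unfold Fk; apply pos_INR | lra]. }
  apply le_INR in TC, XL. rewrite plus_INR, !mult_INR in TC. rewrite !mult_INR in XL.
  rewrite mult_INR in HF. rewrite <- HF in XL.
  assert (INR T * INR s <= 2 * INR (length (X s k)) * E * INR s).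
  { assert (Fk * E <= INR (length (X s k)) * INR s * E) by (apply Rmult_le_compat_r; lra).
    eapply Rle_trans. apply TC.
    replace (2 * INR (length (X s k)) * E * INR s) with (2 * (INR (length (X s k)) * INR s * E)) by ring.
    lra. }
  destruct (Rle_or_lt (INR T) (2 * INR (length (X s k)) * E)); auto.
  assert (2 * INR (length (X s k)) * E * INR s < INR T * INR s) by (apply Rmult_lt_compat_r; lra). lra.
Qed.

End PartH.

Section PartI.
Local Open Scope R_scope.

Fixpoint sumR (n : nat) (f : nat -> R) : R :=
  match n with O => 0 | S n' => sumR n' f + f n' end.

Lemma sumR_le n f g : (forall i, (i < n)%nat -> f i <= g i) -> sumR n f <= sumR n g.
Proof. induction n; simpl; intros H. lra. pose proof (H n ltac:(lia)). pose proof (IHn ltac:(intros; apply H; lia)). lra. Qed.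

Lemma sumR_scal n c f : sumR n (fun i => c * f i) = c * sumR n f.
Proof. induction n; simpl. ring. rewrite IHn. ring. Qed.

Lemma tele (e : nat -> R) N M : sumR N (fun i => if (i + 1 <=? M)%nat then e (i+1)%nat - e i else 0) = e (Nat.min N M) - e 0%nat.
Proof.
  induction N; cbn [sumR]. rewrite Nat.min_0_l. ring. rewrite IHN.
  destruct (Nat.leb_spec (N + 1) M).
  - rewrite Nat.min_l by lia. rewrite Nat.min_l by lia. replace (N + 1)%nat with (S N) by lia. ring.
  - rewrite Nat.min_r by lia. rewrite Nat.min_r by lia. ring.
Qed.

Definition Lsum (F : list bool -> R) (L : list (list bool)) := fold_right (fun p acc => F p + acc) 0 L.

Lemma Lsum_le F G L : (forall p, In p L -> F p <= G p) -> Lsum F L <= Lsum G L.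
Proof. induction L; simpl; intros H. lra. pose proof (H a (or_introl eq_refl)). pose proof (IHL ltac:(intros; apply H; auto)). lra. Qed.

Lemma Lsum_plus_const c F L : Lsum (fun p => c + F p) L = c * INR (length L) + Lsum F L.
Proof. unfold Lsum in *. induction L; cbn [fold_right length]. simpl INR. ring. rewrite IHL. rewrite S_INR. ring. Qed.

Lemma Lsum_sumR N g L : Lsum (fun p => sumR N (g p)) L = sumR N (fun i => Lsum (fun p => g p i) L).
Proof.
  induction L; simpl.
  - induction N; simpl; auto. rewrite <- IHN. ring.
  - rewrite IHL. clear IHL. induction N; simpl. ring. rewrite <- IHN. ring.
Qed.

Lemma Lsum_ind (P : list bool -> bool) d L : Lsum (fun p => if P p then d else 0) L = d * INR (length (filter P L)).
Proof. unfold Lsum in *. induction L; cbn [fold_right length filter]. simpl INR. ring. rewrite IHL. destruct (P a); cbn [length]; try rewrite S_INR; ring. Qed.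

Lemma heights_bound l h : (fold_right Z.max 0 (heights_from h l) <= Z.max 0 (Z.abs h + Z.of_nat (length l)))%Z.
Proof.
  revert h; induction l as [|b l IH]; intros h; simpl. lia.
  specialize (IH (if b then h + 1 else h - 1)%Z). destruct b; lia.
Qed.

Lemma heights_pos l h : (0 <= fold_right Z.max 0 (heights_from h l))%Z.
Proof. revert h; induction l; intros h; simpl. lia. specialize (IHl (if a then h + 1 else h - 1)%Z). lia. Qed.

Lemma geom N y : 0 < y -> sumR N (fun i => exp (- INR (i + 1) * y)) <= 1 / y.
Proof.
  intros Hy.
  assert (Eq : forall N, sumR N (fun i => exp (- INR (i + 1) * y)) * (exp y - 1) = 1 - exp (- INR N * y)).
  { induction N0; cbn [sumR]. replace (- INR 0 * y) with 0 by (simpl; ring). rewrite exp_0. ring.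
    set (A := exp (- INR N0 * y)).
    assert (E1 : exp (- INR (N0 + 1) * y) = A * exp (- y)) by (unfold A; rewrite <- exp_plus; f_equal; rewrite plus_INR; simpl; ring).
    assert (E2 : exp (- INR (S N0) * y) = A * exp (- y)) by (unfold A; rewrite <- exp_plus; f_equal; rewrite S_INR; ring).
    assert (E3 : exp (- y) * exp y = 1) by (rewrite <- exp_plus; replace (- y + y) with 0 by ring; apply exp_0).
    rewrite Rmult_plus_distr_r, IHN0, E1, E2.
    replace (A * exp (- y) * (exp y - 1)) with (A * (exp (- y) * exp y) - A * exp (- y)) by ring.
    rewrite E3. unfold A. ring. }
  pose proof (Eq N) as EN. pose proof (exp_ineq1_le y). pose proof (exp_pos (- INR N * y)).
  set (S := sumR N (fun i => exp (- INR (i + 1) * y))) in *.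
  assert (S * y <= 1).
  { assert (S >= 0).
    { unfold S. clear. induction N; simpl. lra. pose proof (exp_pos (- INR (N + 1) * y)). lra. }
    nra. }
  apply Rmult_le_reg_r with y; auto. unfold Rdiv. rewrite Rmult_assoc, Rinv_l by lra. lra.
Qed.

End PartI.

Section PartJ.
Local Open Scope R_scope.

Lemma P1 m Hh : 0 <= m -> 0 <= Hh -> m - 5 <= 4 * Hh -> m * m / 16 - 7 * m / 8 - 1 / 4 <= (Hh - 1) * Hh.
Proof.
  intros Hm HH Hr.
  destruct (Rle_or_lt 7 m).
  - assert (0 <= m / 4 - 7 / 4) by lra.
    assert ((m / 4 - 7 / 4) * (m / 4 - 7 / 4) <= (Hh - 1/2) * (Hh - 1/2))
      by (apply Rmult_le_compat; lra).
    replace ((Hh - 1) * Hh) with ((Hh - 1/2) * (Hh - 1/2) - 1/4) by field.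
    replace (m * m / 16 - 7 * m / 8 - 1 / 4) with ((m / 4 - 7 / 4) * (m / 4 - 7 / 4) - 49/16 - 1/4) by field.
    lra.
  - assert (0 <= m * (14 - m)) by (apply Rmult_le_pos; lra).
    assert (0 <= (Hh - 1/2) * (Hh - 1/2)) by apply Rle_0_sqr.
    replace (m * m / 16 - 7 * m / 8 - 1 / 4) with (- (m * (14 - m)) / 16 - 1/4) by field.
    replace ((Hh - 1) * Hh) with ((Hh - 1/2) * (Hh - 1/2) - 1/4) by field. lra.
Qed.

Definition K0 a := 8 * ((a + 23/16) * (a + 23/16)) + 1 / 8.

Lemma term_bd a sq m Hh : 0 < a -> 1 <= sq -> 0 <= m -> 0 <= Hh -> m - 5 <= 4 * Hh ->
  (exp (a * m / sq) - exp (a * (m - 1) / sq)) * exp (- (Hh - 1) * Hh / (2 * (sq * sq)))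
  <= (a / sq) * exp (K0 a) * exp (- m * (1 / sq)).
Proof.
  intros Ha Hsq Hm HH Hr.
  set (u := m / sq).
  assert (Hu : 0 <= u) by (unfold u; apply Rmult_le_pos; [lra | left; apply Rinv_0_lt_compat; lra]).
  assert (Emu : m = u * sq) by (unfold u; field; lra).
  assert (E1 : exp (a * (m - 1) / sq) = exp (a * m / sq) * exp (- (a / sq))).
  { rewrite <- exp_plus. f_equal. field. lra. }
  assert (E2 : 1 - exp (- (a / sq)) <= a / sq) by (pose proof (exp_ineq1_le (- (a / sq))); lra).
  assert (E3 : exp (- (a / sq)) <= 1).
  { rewrite <- exp_0. apply exp_mono. assert (0 < a / sq) by (apply Rdiv_lt_0_compat; lra). lra. }
  rewrite E1.
  replace (exp (a * m / sq) - exp (a * m / sq) * exp (- (a / sq))) with (exp (a * m / sq) * (1 - exp (- (a / sq)))) by ring.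
  pose proof (exp_pos (a * m / sq)). pose proof (exp_pos (- (Hh - 1) * Hh / (2 * (sq * sq)))).
  eapply Rle_trans.
  { apply Rmult_le_compat_r. lra. apply Rmult_le_compat_l. lra. apply E2. }
  replace (exp (a * m / sq) * (a / sq) * exp (- (Hh - 1) * Hh / (2 * (sq * sq))))
    with ((a / sq) * exp (a * m / sq + - (Hh - 1) * Hh / (2 * (sq * sq)))) by (rewrite exp_plus; ring).
  rewrite Rmult_assoc. apply Rmult_le_compat_l. left; apply Rdiv_lt_0_compat; lra.
  rewrite <- exp_plus. apply exp_mono.
  pose proof (P1 m Hh Hm HH Hr) as HP.
  assert (F1 : u * u / 32 - 7 * u / 16 - 1 / 8 <= (Hh - 1) * Hh / (2 * (sq * sq))).
  { apply Rmult_le_reg_r with (2 * (sq * sq)). nra.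
    unfold Rdiv at 4. rewrite Rmult_assoc, Rinv_l by nra. rewrite Rmult_1_r.
    rewrite Emu in HP. nra. }
  replace (a * m / sq) with (a * u) by (unfold u; field; lra).
  replace (- m * (1 / sq)) with (- u) by (unfold u; field; lra).
  replace (- (Hh - 1) * Hh / (2 * (sq * sq))) with (- ((Hh - 1) * Hh / (2 * (sq * sq)))) by (field; lra).
  unfold K0.
  assert (0 <= (u - 16 * (a + 23/16)) * (u - 16 * (a + 23/16))) by apply Rle_0_sqr.
  nra.
Qed.

End PartJ.

Section PartK.
Local Open Scope R_scope.

Lemma sumR_ext n f g : (forall i, (i < n)%nat -> f i = g i) -> sumR n f = sumR n g.
Proof. intros H. apply Rle_antisym; apply sumR_le; intros i Hi; rewrite H by auto; lra. Qed.

Lemma Lsum_ind' m d L : Lsum (fun p => if (Z.of_nat m <=? max_height p)%Z then d else 0) L =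
  d * INR (length (filter (fun p => (Z.of_nat m <=? max_height p)%Z) L)).
Proof. apply Lsum_ind. Qed.

Lemma H_facts m : let H := ((m - 2) / 4)%nat in (H = 0 \/ 4 * H + 2 <= m)%nat /\ (m <= 4 * H + 5)%nat.
Proof.
  intros H. pose proof (Nat.div_mod_eq (m - 2) 4). pose proof (Nat.mod_upper_bound (m - 2) 4 ltac:(lia)).
  unfold H. lia.
Qed.

Lemma main_bound a s k : 0 < a -> (1 <= s)%nat ->
  Ek s k (fun p => exp (a * IZR (max_height p) / sqrt (INR s))) <= 1 + 2 * a * exp (K0 a).
Proof.
  intros Ha Hs.
  assert (HS1 : 1 <= INR s) by (apply (le_INR 1); lia).
  set (sq := sqrt (INR s)).
  assert (Hsq1 : 1 <= sq) by (unfold sq; rewrite <- sqrt_1; apply sqrt_le_1_alt; lra).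
  assert (Hsq2 : sq * sq = INR s) by (apply sqrt_sqrt; lra).
  set (f := fun p => exp (a * IZR (max_height p) / sq)).
  set (e := fun m : nat => exp (a * INR m / sq)).
  set (N := (2 * s)%nat).
  set (g := fun p i => if (Z.of_nat (i + 1) <=? max_height p)%Z then e (i + 1)%nat - e i else 0).
  assert (Hpos : 0 < 1 + 2 * a * exp (K0 a)).
  { pose proof (exp_pos (K0 a)). assert (0 < a * exp (K0 a)) by (apply Rmult_lt_0_compat; lra). lra. }
  assert (Hpt : forall p, In p (X s k) -> f p <= 1 + sumR N (g p)).
  { intros p Hp. apply in_X in Hp. destruct Hp as [Hl _].
    set (M := Z.to_nat (max_height p)).
    assert (HM : max_height p = Z.of_nat M) by (unfold M; rewrite Z2Nat.id; auto; apply heights_pos).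
    assert (HMN : (M <= N)%nat).
    { pose proof (heights_bound p 0). unfold max_height in HM. rewrite Hl in H. unfold N. lia. }
    assert (Hg : sumR N (g p) = sumR N (fun i => if (i + 1 <=? M)%nat then e (i+1)%nat - e i else 0)).
    { apply sumR_ext. intros i _. unfold g. rewrite HM.
      destruct (Z.leb_spec (Z.of_nat (i + 1)) (Z.of_nat M)), (Nat.leb_spec (i + 1) M); auto; lia. }
    rewrite Hg, tele, Nat.min_r by lia. unfold f, e. rewrite HM, <- INR_IZR_INZ. simpl INR.
    replace (a * 0 / sq) with 0 by (field; lra). rewrite exp_0. lra. }
  unfold Ek. fold sq.
  replace (fold_right _ 0 (X s k)) with (Lsum f (X s k)) by reflexivity.
  destruct (Nat.eq_dec (length (X s k)) 0) as [L0|L0].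
  { rewrite L0. destruct (X s k); simpl in L0; try lia. unfold Lsum; simpl. unfold Rdiv. rewrite Rmult_0_l. lra. }
  set (n := INR (length (X s k))).
  assert (Hn : 0 < n) by (apply lt_0_INR; lia).
  assert (Hterm : forall i, Lsum (fun p => g p i) (X s k) <= n * (2 * (a / sq) * exp (K0 a) * exp (- INR (i+1) * (1/sq)))).
  { intros i. unfold g. rewrite Lsum_ind'.
    destruct (H_facts (i + 1)) as [HH1 HH2]. set (H := ((i + 1 - 2) / 4)%nat) in *.
    pose proof (tail_real s k H (i + 1) Hs HH1) as TR. fold n in TR.
    assert (Hd : 0 <= e (i + 1)%nat - e i).
    { unfold e. assert (exp (a * INR i / sq) <= exp (a * INR (i+1) / sq)); [|lra].
      apply exp_mono. unfold Rdiv. apply Rmult_le_compat_r. left; apply Rinv_0_lt_compat; lra.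
      apply Rmult_le_compat_l; [lra|]. apply le_INR; lia. }
    eapply Rle_trans. apply Rmult_le_compat_l. exact Hd. exact TR.
    pose proof (term_bd a sq (INR (i + 1)) (INR H) Ha Hsq1 (pos_INR _) (pos_INR _)) as TB.
    assert (INR (i + 1) - 5 <= 4 * INR H).
    { assert (INR (i + 1) <= INR (4 * H + 5)) by (apply le_INR; lia).
      rewrite !plus_INR, !mult_INR in H0. rewrite !plus_INR. simpl in H0. simpl. lra. }
    specialize (TB H0). rewrite Hsq2 in TB.
    replace (e (i + 1)%nat - e i) with (exp (a * INR (i + 1) / sq) - exp (a * (INR (i + 1) - 1) / sq)).
    2: { unfold e. rewrite plus_INR. simpl INR. f_equal. f_equal. f_equal. ring. }
    replace ((exp (a * INR (i + 1) / sq) - exp (a * (INR (i + 1) - 1) / sq)) * (2 * n * exp (- (INR H - 1) * INR H / (2 * INR s))))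
      with (2 * n * ((exp (a * INR (i + 1) / sq) - exp (a * (INR (i + 1) - 1) / sq)) * exp (- (INR H - 1) * INR H / (2 * INR s)))) by ring.
    replace (n * (2 * (a / sq) * exp (K0 a) * exp (- INR (i + 1) * (1 / sq))))
      with (2 * n * ((a / sq) * exp (K0 a) * exp (- INR (i + 1) * (1 / sq)))) by ring.
    apply Rmult_le_compat_l. lra. exact TB. }
  assert (Hsum : Lsum f (X s k) <= n * (1 + 2 * a * exp (K0 a))).
  { eapply Rle_trans. apply (Lsum_le f (fun p => 1 + sumR N (g p))). exact Hpt.
    rewrite Lsum_plus_const, Lsum_sumR. fold n.
    eapply Rle_trans. apply Rplus_le_compat_l. apply sumR_le. intros i _. apply Hterm.
    rewrite (sumR_ext N _ (fun i => (n * (2 * (a / sq) * exp (K0 a))) * exp (- INR (i + 1) * (1 / sq))))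
      by (intros; ring).
    rewrite sumR_scal.
    assert (Hy : 0 < 1 / sq) by (apply Rdiv_lt_0_compat; lra).
    pose proof (geom N (1 / sq) Hy) as GG.
    replace (1 / (1 / sq)) with sq in GG by (field; lra).
    assert (0 <= n * (2 * (a / sq) * exp (K0 a))).
    { apply Rmult_le_pos. lra. apply Rmult_le_pos. apply Rmult_le_pos. lra.
      left; apply Rdiv_lt_0_compat; lra. left; apply exp_pos. }
    assert (n * (2 * (a / sq) * exp (K0 a)) * sumR N (fun i => exp (- INR (i + 1) * (1 / sq)))
            <= n * (2 * (a / sq) * exp (K0 a)) * sq) by (apply Rmult_le_compat_l; auto).
    replace (n * (2 * (a / sq) * exp (K0 a)) * sq) with (n * (2 * a * exp (K0 a))) in H0 by (field; lra).
    lra. }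
  unfold Rdiv. apply Rmult_le_reg_r with n; auto.
  rewrite Rmult_assoc, Rinv_l by lra. lra.
Qed.

End PartK.


Open Scope R_scope.

Theorem lemma3p1 (alpha' alpha a : R)
  (Ha' : 0 < alpha') (Hlt : alpha' < alpha) (Ha1 : alpha < 1) (Ha : 0 < a) :
  exists b : R, 0 < b /\
    forall s k : nat, (1 <= s)%nat ->
      alpha' * INR s <= INR k <= alpha * INR s ->
      Ek s k (fun p => exp (a * IZR (max_height p) / sqrt (INR s))) <= b.
Proof.
  exists (1 + 2 * a * exp (K0 a)). split.
  - pose proof (exp_pos (K0 a)). assert (0 < a * exp (K0 a)) by (apply Rmult_lt_0_compat; lra). lra.
  - intros s k Hs _. apply main_bound; auto.
Qed.
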